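(* Consider an unlabeled tabletop rearrangement instance whose unlabeled dependency graph is the dependency grid $\mathcal{D}(m,2m)$, and any moment during the execution of a valid plan with external buffers. For a column index $i$ with $1\le i<m$, if $f_i+f_{i+1}\notin\{0,2m\}$, then $c_i+c_{i+1}\ge 1$.
   Context: An unlabeled tabletop rearrangement instance has congruent interchangeable objects, a feasible start arrangement and a feasible goal arrangement (no two placed footprints with intersecting interiors). Its unlabeled dependency graph is bipartite with a start vertex per start pose and a goal vertex per goal pose, adjacent iff footprints at those poses overlap. In a valid plan with external buffers each object is picked from its start pose exactly once and placed either at an unoccupied goal pose or into an external buffer (later moved from the buffer to an unoccupied goal pose); an object may be placed at a goal pose only if it overlaps no object currently in the workspace, so a goal vertex can be occupied only after the objects at all adjacent start vertices have been picked. The dependency grid $\mathcal{D}(w,h)$ has vertices $v_{x,y}$, $1\le x\le w$ (column), $1\le y\le h$ (row), with $v_{x,y}$, $v_{x',y'}$ adjacent iff $|x-x'|+|y-y'|=1$; $v_{x,y}$ is a start vertex if $x+y$ is even and a goal vertex otherwise. In $\mathcal{D}(m,2m)$ the vertex pair $p_{i,j}$ ($1\le i,j\le m$) is $\{v_{i,2j-1},v_{i,2j}\}$; it contains one start and one goal vertex. At a given moment, a goal vertex is filled if an object is placed at the corresponding goal pose; a start vertex is cleared if the object originally at it has been picked but the goal vertex in the same vertex pair is not filled. For column $i$, $f_i$ is the number of filled goal vertices and $c_i$ the number of cleared start vertices in column $i$. *)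

(* Defs.v *)
From mathcomp Require Import all_boot.
Set Implicit Arguments. Unset Strict Implicit. Unset Printing Implicit Defensive.

(* Dependency grid D(m, 2m), 0-indexed: the vertex (x, y) : 'I_m * 'I_(2m)
   stands for v_{x+1, y+1} (column x+1, row y+1). *)
Definition V (m : nat) := ('I_m * 'I_(2 * m))%type.

Section Grid.
Variable m : nat.

(* v_{x,y} is a start vertex iff x + y is even ((x+1)+(y+1) has the same parity). *)
Definition is_start (v : V m) : bool := ~~ odd (v.1 + v.2).
Definition is_goal (v : V m) : bool := odd (v.1 + v.2).

Definition adj (u v : V m) : bool :=
  ((nat_of_ord u.1 == v.1) && ((u.2.+1 == v.2) || (v.2.+1 == u.2)))
  || ((nat_of_ord u.2 == v.2) && ((u.1.+1 == v.1) || (v.1.+1 == u.1))).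

(* u and v belong to the same vertex pair p_{i,j} = {v_{i,2j-1}, v_{i,2j}}
   (0-indexed rows 2(j-1), 2(j-1)+1). *)
Definition same_pair (u v : V m) : bool :=
  (nat_of_ord u.1 == v.1) && ((u.2)./2 == (v.2)./2).

(* State of an execution with external buffers (objects are interchangeable,
   so the buffer is described by the number of objects it holds). *)
Record state := State {
  picked : {set V m};
  filled : {set V m};
  buf : nat
}.

Definition init_state : state := State set0 set0 0.

Inductive action :=
| PickToGoal of V m & V m
| PickToBuffer of V m
| BufferToGoal of V m.

(* A goal g may be filled only if it is unoccupied and no object currently in
   the workspace overlaps it, i.e. every adjacent start vertex is already
   picked (the object being moved, at start s, counts as picked). *)
Definition step (a : action) (st : state) : option state :=
  match a with
  | PickToGoal s g =>
      if [&& is_start s, s \notin picked st, is_goal g, g \notin filled st &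
             [forall u, (is_start u && adj u g) ==> (u \in s |: picked st)]]
      then Some (State (s |: picked st) (g |: filled st) (buf st))
      else None
  | PickToBuffer s =>
      if is_start s && (s \notin picked st)
      then Some (State (s |: picked st) (filled st) (buf st).+1)
      else None
  | BufferToGoal g =>
      if [&& 0 < buf st, is_goal g, g \notin filled st &
             [forall u, (is_start u && adj u g) ==> (u \in picked st)]]
      then Some (State (picked st) (g |: filled st) (buf st).-1)
      else None
  end.

Fixpoint exec (p : seq action) (st : state) : option state :=
  match p with
  | [::] => Some st
  | a :: p' => if step a st is Some st' then exec p' st' else None
  end.

Definition valid_plan (p : seq action) : Prop :=
  exists st, exec p init_state = Some st /\
    picked st = [set v | is_start v] /\
    filled st = [set v | is_goal v] /\ buf st = 0.

Definition f_col (st : state) (i : nat) : nat :=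
  #|[set g in filled st | is_goal g && (nat_of_ord g.1 == i)]|.

Definition cleared (st : state) (s : V m) : bool :=
  [&& is_start s, s \in picked st &
      ~~ [exists g, [&& is_goal g, same_pair s g & g \in filled st]]].

Definition c_col (st : state) (i : nat) : nat :=
  #|[set s | cleared st s && (nat_of_ord s.1 == i)]|.

End Grid.

(* Main.v *)
Require Import Defs.
From mathcomp Require Import all_boot.
From mathcomp Require Import zify.
Set Implicit Arguments. Unset Strict Implicit.

Definition Inv m (st : state m) : Prop :=
  forall g u, g \in filled st -> is_start u -> adj u g -> u \in picked st.

Lemma step_inv m (a : action m) st st' : step a st = Some st' -> Inv st -> Inv st'.
Proof.
case: a => [s g|s|g] /=.
- case: ifP => // /and5P[_ _ _ _ /forallP H] [<-] I g' u /=.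
  rewrite in_setU1 => /orP[/eqP->|hg] hu ha.
    by move: (H u); rewrite hu ha /= => ->.
  by rewrite in_setU1 (I g' u) ?orbT.
- case: ifP => // _ [<-] I g' u /= hg hu ha.
  by rewrite in_setU1 (I g' u) ?orbT.
- case: ifP => // /and4P[_ _ _ /forallP H] [<-] I g' u /=.
  rewrite in_setU1 => /orP[/eqP->|hg] hu ha.
    by move: (H u); rewrite hu ha /= => ->.
  by rewrite (I g' u).
Qed.

Lemma exec_inv m (q : seq (action m)) st st' : exec q st = Some st' -> Inv st -> Inv st'.
Proof.
elim: q st => [|a q IH] st /=; first by move=> [<-].
case E: (step a st) => [s1|] // /IH H I; apply: H; exact: step_inv E I.
Qed.

Lemma inv_init m : Inv (init_state m).
Proof. by move=> g u; rewrite /= in_set0. Qed.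

Lemma half_lt m (r : 'I_(2 * m)) : r./2 < m.
Proof. have := ltn_ord r; lia. Qed.
Definition F m (st : state m) (x j : nat) : Prop :=
  exists g : V m, [/\ g \in filled st, is_goal g, nat_of_ord g.1 = x & g.2./2 = j].

Section Main.
Variables (m : nat) (st : state m) (i : nat).
Hypothesis I : Inv st.
Hypothesis NC : forall s : V m, (nat_of_ord s.1 == i) || (nat_of_ord s.1 == i.+1) -> ~~ cleared st s.

Lemma gen (g u : V m) : g \in filled st -> is_start u -> adj u g ->
  (nat_of_ord u.1 == i) || (nat_of_ord u.1 == i.+1) -> F st u.1 u.2./2.
Proof.
move=> hg hu ha hc; have hp := I hg hu ha.
move: (NC hc); rewrite /cleared hu hp /= negbK => /existsP[g' /and3P[hg' /andP[/eqP e1 /eqP e2] hf]].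
by exists g'; split.
Qed.

Lemma horiz x x' (hx' : x' < m) j : ((x == i) || (x == i.+1)) -> ((x' == i) || (x' == i.+1)) ->
  (x' == x.+1) || (x == x'.+1) -> F st x j -> F st x' j.
Proof.
move=> cx cx' hxx [g [hg hgo e1 e2]].
pose u : V m := (Ordinal hx', g.2).
have : F st u.1 u.2./2; last by rewrite /= e2.
apply: (@gen g u hg).
- move: hgo; rewrite /is_start /is_goal /= e1; move: hxx; lia.
- rewrite /adj /= eqxx /= e1; move: hxx; lia.
- by [].
Qed.
End Main.
Section Main2.
Variables (m : nat) (st : state m) (i : nat).
Hypothesis I : Inv st.
Hypothesis NC : forall s : V m, (nat_of_ord s.1 == i) || (nat_of_ord s.1 == i.+1) -> ~~ cleared st s.

Lemma up x j : ((x == i) || (x == i.+1)) -> ~~ odd x -> j.+1 < m -> F st x j -> F st x j.+1.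
Proof.
move=> cx ox hj [g [hg hgo e1 e2]].
have hr : (g.2).+1 < 2 * m by move: hgo; rewrite /is_goal e1; lia.
pose u : V m := (g.1, Ordinal hr).
have : F st u.1 u.2./2.
  apply: (@gen m st i I NC g u hg).
  - move: hgo; rewrite /is_start /is_goal /= e1; lia.
  - rewrite /adj /= !eqxx /=; lia.
  - by rewrite /= e1.
move=> H; have <- : (u.2)./2 = j.+1 by rewrite /=; move: hgo; rewrite /is_goal e1 -e2 => ?; lia.
by rewrite -e1.
Qed.

Lemma down x j : ((x == i) || (x == i.+1)) -> odd x -> F st x j.+1 -> F st x j.
Proof.
move=> cx ox [g [hg hgo e1 e2]].
have hr : (g.2).-1 < 2 * m by have := ltn_ord g.2; lia.
pose u : V m := (g.1, Ordinal hr).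
have : F st u.1 u.2./2.
  apply: (@gen m st i I NC g u hg).
  - move: hgo; rewrite /is_start /is_goal /= e1; lia.
  - rewrite /adj /= !eqxx /=; move: hgo; rewrite /is_goal e1; lia.
  - by rewrite /= e1.
move=> H; have <- : (u.2)./2 = j by rewrite /=; move: hgo e2; rewrite /is_goal e1; lia.
by rewrite -e1.
Qed.
End Main2.

Lemma spread (A B : nat -> Prop) m :
  (forall j, j < m -> A j -> B j) -> (forall j, j < m -> B j -> A j) ->
  (forall j, j.+1 < m -> A j -> A j.+1) -> (forall j, B j.+1 -> B j) ->
  (exists j, j < m /\ (A j \/ B j)) -> forall j, j < m -> A j /\ B j.
Proof.
move=> AB BA Aup Bdn [j0 [hj0 h0]].
have A0 : A j0 by case: h0 => // /BA; apply.
have Aall : forall k, j0 + k < m -> A (j0 + k).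
  elim=> [|k IH] hk; first by rewrite addn0.
  rewrite addnS; apply: Aup; [lia | apply: IH; lia].
have Btop : B m.-1.
  have -> : m.-1 = j0 + (m.-1 - j0) by lia.
  apply: AB; first lia. apply: Aall; lia.
have Ball : forall k, k <= m.-1 -> B (m.-1 - k).
  elim=> [|k IH] hk; first by rewrite subn0.
  have e : m.-1 - k = (m.-1 - k.+1).+1 by lia.
  apply: Bdn; rewrite -e; apply: IH; lia.
move=> j hj.
have Bj : B j.
  have -> : j = m.-1 - (m.-1 - j) by lia.
  apply: Ball; lia.
by split => //; apply: BA.
Qed.
Lemma count_col m (st : state m) x : x < m -> (forall j, j < m -> F st x j) -> f_col st x = m.
Proof.
move=> hx H.
set A := [set g in filled st | is_goal g && (nat_of_ord g.1 == x)].
pose h (g : V m) : 'I_m := Ordinal (half_lt g.2).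
have inj : {in A &, injective h}.
  move=> [a1 b1] [a2 b2]; rewrite !inE /= => /andP[_ /andP[o1 /eqP x1]] /andP[_ /andP[o2 /eqP x2]] [] e.
  have ea : a1 = a2 by apply: val_inj; rewrite /= x1 x2.
  have eb : b1 = b2.
    apply: val_inj; move: o1 o2 e; rewrite /is_goal /= ea x2 => o1 o2 e; lia.
  by rewrite ea eb.
rewrite /f_col -/A -(card_in_imset inj).
have -> : [set h g | g in A] = [set: 'I_m].
  apply/setP => j; rewrite inE; apply/imsetP.
  have [g [hg hgo e1 e2]] := H j (ltn_ord j).
  exists g; first by rewrite !inE hg hgo e1 eqxx.
  by apply: val_inj; rewrite /= e2.
by rewrite cardsT card_ord.
Qed.

Theorem lemma3 (m : nat) (p : seq (action m)) (k : nat) (st : state m) (i : nat) :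
  valid_plan p ->
  k <= size p ->
  exec (take k p) (init_state m) = Some st ->
  i.+1 < m ->
  f_col st i + f_col st i.+1 \notin [:: 0; 2 * m] ->
  1 <= c_col st i + c_col st i.+1.
Proof.
move=> _ _ hex him hf.
have I : Inv st := exec_inv hex (@inv_init m).
rewrite lt0n; apply/negP => /eqP hc.
have NC : forall s : V m, (nat_of_ord s.1 == i) || (nat_of_ord s.1 == i.+1) -> ~~ cleared st s.
  move=> s /orP[] hs; apply/negP => cs.
  - have c0 : c_col st i = 0 by lia.
    by have := card0_eq c0 s; rewrite inE cs hs.
  - have c0 : c_col st i.+1 = 0 by lia.
    by have := card0_eq c0 s; rewrite inE cs hs.
have hi : i < m by lia.
have ex : exists j, j < m /\ (F st i j \/ F st i.+1 j).
  case: (posnP (f_col st i)) => [fi0|/card_gt0P [g]].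
    case: (posnP (f_col st i.+1)) => [fi1|/card_gt0P [g]].
      by move: hf; rewrite fi0 fi1.
    rewrite inE => /andP[hg /andP[hgo /eqP e]].
    exists g.2./2; split; first exact: half_lt.
    by right; exists g.
  rewrite inE => /andP[hg /andP[hgo /eqP e]].
  exists g.2./2; split; first exact: half_lt.
  by left; exists g.
have cI : (i == i) || (i == i.+1) by rewrite eqxx.
have cI1 : (i.+1 == i) || (i.+1 == i.+1) by rewrite eqxx orbT.
have all : forall j, j < m -> F st i j /\ F st i.+1 j.
  case: (boolP (odd i)) => oi.
  - have S := @spread (F st i.+1) (F st i) m
      (fun j _ => @horiz m st i I NC i.+1 i hi j cI1 cI (ltac:(by rewrite eqxx orbT)))
      (fun j _ => @horiz m st i I NC i i.+1 him j cI cI1 (ltac:(by rewrite eqxx)))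
      (fun j hj => @up m st i I NC i.+1 j cI1 (ltac:(by rewrite /= oi)) hj)
      (fun j => @down m st i I NC i j cI oi).
    have ex' : exists j, j < m /\ (F st i.+1 j \/ F st i j).
      by case: ex => j0 [? [] ?]; exists j0; split => //; [right|left].
    by move=> j hj; have [? ?] := S ex' j hj; split.
  - have S := @spread (F st i) (F st i.+1) m
      (fun j _ => @horiz m st i I NC i i.+1 him j cI cI1 (ltac:(by rewrite eqxx)))
      (fun j _ => @horiz m st i I NC i.+1 i hi j cI1 cI (ltac:(by rewrite eqxx orbT)))
      (fun j hj => @up m st i I NC i j cI oi hj)
      (fun j => @down m st i I NC i.+1 j cI1 (ltac:(by rewrite /= (negbTE oi)))).
    by move=> j hj; have [? ?] := S ex j hj; split.
have f0 := count_col hi (fun j hj => (all j hj).1).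
have f1 := count_col him (fun j hj => (all j hj).2).
by move: hf; rewrite f0 f1 addnn -mul2n !inE eqxx orbT.
Qed.
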